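(* Let $V=\mathbb{F}_2^s$ and let $\circ$ and $\diamond$ be two alternative operations on $V$ with $\dim W_\circ=\dim W_\diamond=s-3$. Then the groups $H_\circ$ and $H_\diamond$ are conjugate by some $g\in\mathrm{GL}(V)$ if and only if $\dim U_\circ=\dim U_\diamond$.
   Context: An alternative operation on $V$ is defined from an elementary abelian $2$-subgroup $T<\mathrm{AGL}(V,+)$ acting regularly on $V$: with $\tau_a$ the unique element of $T$ sending $0$ to $a$ (postfix notation), $a\circ b:=a\tau_b$. It is assumed that the xor-translations lie in $\mathrm{AGL}(V,\circ)$, the normaliser of $T$ in $\mathrm{Sym}(V)$; $\mathrm{GL}(V,\circ)$ is the stabiliser of $0$ in $\mathrm{AGL}(V,\circ)$ and $H_\circ:=\mathrm{GL}(V,+)\cap\mathrm{GL}(V,\circ)$. The weak key space is $W_\circ=\{k: x\circ k=x+k\ \forall x\}$; the product is $a\cdot b=a+b+a\circ b$ and the error space is $U_\circ=\{a\cdot b: a,b\in V\}$. Conjugation by $g$ means $G\mapsto gGg^{-1}$. *)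

(* Defs.v *)
From HB Require Import structures.
From mathcomp Require Import all_boot all_order all_algebra all_fingroup all_solvable.
Set Implicit Arguments. Unset Strict Implicit. Unset Printing Implicit Defensive.
Import GRing.Theory.

Definition V (s : nat) := 'rV['F_2]_s.

Local Open Scope ring_scope.

Definition AGLp (s : nat) : {set {perm V s}} :=
  [set f : {perm V s} | [exists A : 'M['F_2]_s, exists b : V s,
     (A \in unitmx) && [forall x : V s, f x == x *m A + b]]].

Definition GLp (s : nat) : {set {perm V s}} :=
  [set f : {perm V s} | [exists A : 'M['F_2]_s,
     (A \in unitmx) && [forall x : V s, f x == x *m A]]].

Definition regular (s : nat) (T : {set {perm V s}}) : Prop :=
  forall x y : V s, exists! t : {perm V s}, t \in T /\ t x = y.

(* T defines an alternative operation: elementary abelian 2-subgroup of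
   AGL(V,+), regular on V, whose normaliser in Sym(V) contains all
   xor-translations x |-> x + a. *)
Definition alt_op (s : nat) (T : {group {perm V s}}) : Prop :=
  [/\ (2.-abelem T)%g, T \subset AGLp s, regular T &
      forall a : V s, exists2 n : {perm V s}, n \in 'N(T)%g & forall x, n x = x + a].

Definition tau (s : nat) (T : {set {perm V s}}) (a : V s) : {perm V s} :=
  odflt 1%g [pick t in T | t 0 == a].

Definition circ (s : nat) (T : {set {perm V s}}) (a b : V s) : V s := tau T b a.

(* AGL(V,o) = 'N(T);  GL(V,o) = stabiliser of 0 in AGL(V,o) *)
Definition GLcirc (s : nat) (T : {set {perm V s}}) : {set {perm V s}} :=
  [set f in 'N(T)%g | f 0 == 0].

Definition Hcirc (s : nat) (T : {set {perm V s}}) : {set {perm V s}} :=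
  GLp s :&: GLcirc T.

Definition Wcirc (s : nat) (T : {set {perm V s}}) : {set V s} :=
  [set k : V s | [forall x : V s, circ T x k == x + k]].

Definition dotp (s : nat) (T : {set {perm V s}}) (a b : V s) : V s :=
  a + b + circ T a b.

Definition Wsp (s : nat) (T : {set {perm V s}}) : {vspace V s} :=
  <<enum (Wcirc T)>>%VS.

Definition Usp (s : nat) (T : {set {perm V s}}) : {vspace V s} :=
  <<[seq dotp T a b | a <- enum [set: V s], b <- enum [set: V s]]>>%VS.

(* Main.v *)
Require Import Defs.
From HB Require Import structures.
From mathcomp Require Import all_boot all_order all_algebra all_fingroup all_solvable.
From mathcomp Require Import ring zify.
Set Implicit Arguments. Unset Strict Implicit. Unset Printing Implicit Defensive.
Import GRing.Theory.
Local Open Scope ring_scope.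

Lemma c2 : (2%:R : 'F_2) = 0. Proof. by apply/eqP. Qed.
Lemma c3 : (3%:R : 'F_2) = 1. Proof. by apply/eqP. Qed.
Lemma c4 : (4%:R : 'F_2) = 0. Proof. by apply/eqP. Qed.
Lemma c5 : (5%:R : 'F_2) = 1. Proof. by apply/eqP. Qed.
Lemma c6 : (6%:R : 'F_2) = 0. Proof. by apply/eqP. Qed.
Lemma c7 : (7%:R : 'F_2) = 1. Proof. by apply/eqP. Qed.
Lemma c8 : (8%:R : 'F_2) = 0. Proof. by apply/eqP. Qed.
Lemma oppF2 (c : 'F_2) : - c = c.
Proof. by apply/eqP; rewrite eq_sym -subr_eq0 opprK; rewrite -mulr2n -mulr_natl c2 mul0r. Qed.
Ltac f2 := rewrite ?oppF2; match goal with |- @eq _ ?a ?b => change (@eq 'F_2 a b) end; ring: c2 c3 c4 c5 c6 c7 c8.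
Ltac vid := apply/rowP => ?; rewrite !mxE; f2.
Lemma F2cases (c : 'F_2) : c = 0 \/ c = 1.
Proof. by case: c => [[|[|]]] //= H; [left|right]; apply/val_inj. Qed.

Section Gen.
Variable s : nat.
Implicit Types (x y z a b : V s).

Lemma addvv x : x + x = 0.
Proof. by apply/rowP => j; rewrite !mxE; f2. Qed.

Lemma oppvE x : - x = x.
Proof. by apply/rowP => j; rewrite !mxE; f2. Qed.

Definition addf (f : V s -> V s) := forall x y, f (x + y) = f x + f y.

Lemma addf0 f : addf f -> f 0 = 0.
Proof. by move=> hf; have := hf 0 0; rewrite addr0 => /eqP; rewrite -subr_eq subrr eq_sym => /eqP. Qed.

Lemma addfZ f c x : addf f -> f (c *: x) = c *: f x.
Proof. by move=> hf; case: (F2cases c) => ->; rewrite ?scale0r ?scale1r ?addf0. Qed.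

Lemma addf_sum f (I : Type) (r : seq I) (P : pred I) (F : I -> V s) : addf f ->
  f (\sum_(i <- r | P i) F i) = \sum_(i <- r | P i) f (F i).
Proof. by move=> hf; apply: (big_morph f hf (addf0 hf)). Qed.

Lemma GLpE (g : {perm V s}) : (g \in GLp s) <-> addf g.
Proof.
split.
  rewrite inE => /existsP[A /andP[_ /forallP H]] x y.
  by rewrite (eqP (H (x + y))) (eqP (H x)) (eqP (H y)) mulmxDl.
move=> hg; rewrite inE; apply/existsP.
pose A : 'M['F_2]_s := \matrix_(i, j) (g 'e_i) 0 j.
have HA x : x *m A = g x.
  rewrite mulmx_sum_row {2}(row_sum_delta x) (addf_sum _ _ _ hg).
  by apply: eq_bigr => i _; rewrite (addfZ _ _ hg); congr (_ *: _); apply/rowP => j; rewrite !mxE.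
exists A; apply/andP; split.
  rewrite -row_free_unit; apply: inj_row_free => v; rewrite HA => hv.
  by apply: (@perm_inj _ g); rewrite hv addf0.
by apply/forallP => x; rewrite HA.
Qed.

End Gen.

Section AltOp.
Variable s : nat.
Variable T : {group {perm V s}}.
Hypothesis hT : alt_op T.
Implicit Types (x y z a b c : V s).

Lemma tauP a : tau T a \in T /\ tau T a 0 = a.
Proof.
rewrite /tau; case: pickP => [t /andP[tT /eqP ->]|] //.
case: hT => _ _ reg _; have [t [[tT t0] _]] := reg 0 a.
by move/(_ t); rewrite tT t0 eqxx.
Qed.

Lemma tau_uniq t : t \in T -> tau T (t 0) = t.
Proof.
move=> tT; case: hT => _ _ reg _; have [t' [_ uniq]] := reg 0 (t 0).
have [h1 h2] := tauP (t 0).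
by rewrite -(uniq _ (conj h1 h2)) -(uniq _ (conj tT erefl)).
Qed.

Lemma tau_aff a : exists M, forall x, tau T a x = x *m M + a.
Proof.
case: hT => _ /subsetP sub _ _; have [tT t0] := tauP a.
move: (sub _ tT); rewrite inE => /existsP[A /existsP[v /andP[_ /forallP H]]].
exists A => x; rewrite (eqP (H x)); congr (_ + _).
by move: (eqP (H 0)); rewrite t0 mul0mx add0r.
Qed.

Let D := dotp T.

Lemma tauE x b : tau T b x = x + b + D x b.
Proof. by rewrite /D /dotp /circ; apply/rowP => j; rewrite !mxE; f2. Qed.

Lemma D_addl x y b : D (x + y) b = D x b + D y b.
Proof.
have [M HM] := tau_aff b.
have E z : D z b = z + z *m M.
  by rewrite /D /dotp /circ HM addrACA addvv addr0.
by rewrite !E mulmxDl addrACA.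
Qed.

Lemma D_sym a b : D a b = D b a.
Proof.
case: hT => /(abelemP (isT : prime 2)) [abT _] _ _ _.
have [ta _] := tauP a; have [tb _] := tauP b.
have := (centsP abT) _ ta _ tb => /(congr1 (fun p : {perm V s} => p 0)).
rewrite !permM !(proj2 (tauP _)) => H.
by rewrite /D /dotp /circ H (addrC a b).
Qed.

Lemma D_alt a : D a a = 0.
Proof.
case: hT => /(abelemP (isT : prime 2)) [_ ex2] _ _ _.
have [ta t0] := tauP a.
have := ex2 _ ta; rewrite expgS expg1 => /(congr1 (fun p : {perm V s} => p 0)).
rewrite permM perm1 t0 => H.
by rewrite /D /dotp /circ H addvv add0r.
Qed.

Lemma D_addr x y b : D b (x + y) = D b x + D b y.
Proof. by rewrite D_sym D_addl !(D_sym b). Qed.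

Lemma D_DD x a b : D x (D a b) = 0.
Proof.
case: hT => _ _ _ /(_ a) [n nN nE].
have nVE y : n^-1%g y = y + a.
  by apply: (@perm_inj _ n); rewrite permKV nE -addrA addvv addr0.
have [tb _] := tauP b.
have := tau_uniq (_ : (tau T b ^ n)%g \in T); rewrite memJ_norm // => /(_ tb).
rewrite conjgE !permM nVE add0r nE => /(congr1 (fun p : {perm V s} => p x)).
rewrite !permM nVE nE (tauE (x + a) b) D_addl (tauE a b).
move: (D a b) => r Hx.
move: Hx; rewrite tauE !D_addr.
move: (D x a) (D x b) (D x r) => p q t Hx.
apply/rowP => j; have := congr1 (fun v : V s => v 0 j) Hx; rewrite !mxE => Hj.
have -> : t 0 j = (x 0 j + (a 0 j + b 0 j + r 0 j + a 0 j) + (p 0 j + q 0 j + t 0 j + p 0 j)) + (x 0 j + a 0 j + b 0 j + (q 0 j + r 0 j) + a 0 j) by f2.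
by rewrite Hj; f2.
Qed.

End AltOp.

Definition Hset s (B : V s -> V s -> V s) : {set {perm V s}} :=
  [set g | (g \in GLp s) && [forall a, forall b, g (B a b) == B (g a) (g b)]].
Definition WB s (B : V s -> V s -> V s) : {vspace V s} :=
  <<enum [set k : V s | [forall x, B x k == 0%R]]>>%VS.
Definition UB s (B : V s -> V s -> V s) : {vspace V s} :=
  <<[seq B a b | a <- enum [set: V s], b <- enum [set: V s]]>>%VS.

Section AltOp2.
Variable s : nat.
Variable T : {group {perm V s}}.
Hypothesis hT : alt_op T.

Lemma HcircE : Hcirc T = Hset (dotp T).
Proof.
apply/setP => g.
have -> : (g \in Hset (dotp T)) = (g \in GLp s) && [forall a, forall b, g (dotp T a b) == dotp T (g a) (g b)] by rewrite inE.
have -> : (g \in Hcirc T) = (g \in GLp s) && ((g \in 'N(T)%g) && (g 0 == 0)) by rewrite /Hcirc /GLcirc in_setI; congr (_ && _); rewrite inE.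
case gGL: (g \in GLp s) => //=.
have hg := (proj1 (GLpE g) gGL).
have g0 := addf0 hg.
have gV0 : (g^-1)%g 0 = 0 by apply: (@perm_inj _ g); rewrite permKV g0.
rewrite g0 eqxx andbT; apply/idP/idP.
  move=> gN; apply/forallP => z; apply/forallP => b; apply/eqP.
  have [tb _] := tauP hT b.
  have := tau_uniq hT (_ : (tau T b ^ g)%g \in T); rewrite memJ_norm // => /(_ tb).
  rewrite conjgE !permM gV0 (proj2 (tauP hT b)) => /(congr1 (fun p : {perm V s} => p (g z))).
  rewrite !permM permK !tauE // hg hg => /eqP; rewrite -addrA -[X in _ == X]addrA.
  by rewrite (inj_eq (addrI _)) (inj_eq (addrI _)) => /eqP.
move=> /forallP H; rewrite inE; apply/subsetP => _ /imsetP[t tT ->].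
rewrite -(tau_uniq hT tT).
have -> : (tau T (t 0) ^ g)%g = tau T (g (t 0)).
  apply/permP => y; rewrite conjgE !permM.
  rewrite -{2}(permKV g y); move: ((g^-1)%g y) => z.
  by rewrite !tauE // hg hg (eqP (forallP (H z) (t 0))).
exact: (proj1 (tauP hT _)).
Qed.

Lemma WspE : Wsp T = WB (dotp T).
Proof.
rewrite /Wsp /WB; have -> : Wcirc T = [set k : V s | [forall x, dotp T x k == 0%R]]; last by []. apply/setP => k; rewrite !inE.
apply/forallP/forallP => H x; move: (H x) => /eqP Hx; apply/eqP.
  by rewrite /dotp Hx addvv.
by apply/rowP => j; move/rowP: Hx => /(_ j); rewrite /dotp !mxE => Hx; rewrite -[LHS]addr0 -Hx; f2.
Qed.

Lemma UspE : Usp T = UB (dotp T).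
Proof. by []. Qed.

End AltOp2.

Lemma span3P n (f0 f1 f2 y : V n) : y \in <<[:: f0; f1; f2]>>%VS ->
  exists c0 c1 c2, y = c0 *: f0 + c1 *: f1 + c2 *: f2.
Proof.
rewrite !span_cons span_nil addv0 => /memv_addP[y0 /vlineP[c0 ->] [y' /memv_addP[y1 /vlineP[c1 ->] [y2 /vlineP[c2 ->] ->]] ->]].
by exists c0, c1, c2; rewrite addrA.
Qed.

Lemma free3 n (f0 f1 f2 : V n) c0 c1 c2 : free [:: f0; f1; f2] ->
  c0 *: f0 + c1 *: f1 + c2 *: f2 = 0 -> [/\ c0 = 0, c1 = 0 & c2 = 0].
Proof.
move=> /(@freeP _ _ 3 [tuple f0; f1; f2]) H E.
pose k (i : 'I_3) := nth 0 [:: c0; c1; c2] i.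
have Hs : \sum_(i < 3) k i *: [tuple f0; f1; f2]`_i = 0.
  by rewrite !big_ord_recl big_ord0 /= addr0 addrA.
by split; [apply: (H k Hs ord0) | apply: (H k Hs (lift ord0 ord0)) | apply: (H k Hs (lift ord0 (lift ord0 ord0)))].
Qed.

Lemma free2 n (f0 f1 : V n) c0 c1 : free [:: f0; f1] ->
  c0 *: f0 + c1 *: f1 = 0 -> c0 = 0 /\ c1 = 0.
Proof.
move=> /(@freeP _ _ 2 [tuple f0; f1]) H E.
pose k (i : 'I_2) := nth 0 [:: c0; c1] i.
have Hs : \sum_(i < 2) k i *: [tuple f0; f1]`_i = 0.
  by rewrite !big_ord_recl big_ord0 /= addr0.
by split; [apply: (H k Hs ord0) | apply: (H k Hs (lift ord0 ord0))].
Qed.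

Definition cx n (x : V n.+1) (k : nat) : 'F_2 := x 0 (inord k).
Fact ev_key : unit. Proof. exact: tt. Qed.
Definition ev n (k : nat) : V n.+1 := locked_with ev_key (\row_(j < n.+1) ((val j == k)%:R)).
Lemma evE n k j : ev n k 0 j = (val j == k)%:R.
Proof. by rewrite /ev unlock mxE. Qed.
Definition B3 n (x y : V n.+1) : V n.+1 :=
  (cx x 0 * cx y 1 + cx x 1 * cx y 0) *: ev n 3 + (cx x 0 * cx y 2 + cx x 2 * cx y 0) *: ev n 4
  + (cx x 1 * cx y 2 + cx x 2 * cx y 1) *: ev n 5.
Definition B2 n (x y : V n.+1) : V n.+1 :=
  (cx x 0 * cx y 2 + cx x 2 * cx y 0) *: ev n 3 + (cx x 1 * cx y 2 + cx x 2 * cx y 1) *: ev n 4.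
Definition Bstd n (d : nat) := if d == 3 then @B3 n else @B2 n.
Arguments Bstd : clear implicits.
Arguments ev : clear implicits.

Lemma free_sum0 s (X : seq (V s)) n : size X = n -> free X ->
  forall k : 'I_n -> 'F_2, \sum_(i < n) k i *: X`_i = 0 -> forall i, k i = 0.
Proof. by move=> <- /(@freeP _ _ _ (in_tuple X)). Qed.

Lemma vline0 n : (<[0 : V n]> = 0)%VS.
Proof.
apply/eqP; rewrite -subv0; apply/subvP => v /vlineP[c ->].
by rewrite scaler0 mem0v.
Qed.

Section Abs.
Variable m : nat.
Local Notation VV := (V m.+3).
Variable B : VV -> VV -> VV.
Hypothesis Badd : forall x y z, B (x + y) z = B x z + B y z.
Hypothesis Bsym : forall x y, B x y = B y x.
Hypothesis Balt : forall x, B x x = 0.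
Hypothesis BB : forall x y z, B x (B y z) = 0.
Implicit Types (x y z v w : VV).

Lemma Baddr x y z : B z (x + y) = B z x + B z y.
Proof. by rewrite Bsym Badd !(Bsym _ z). Qed.
Lemma BZl c x y : B (c *: x) y = c *: B x y.
Proof. by apply: (@addfZ _ (B ^~ y)) => a b; rewrite Badd. Qed.
Lemma BZr c x y : B y (c *: x) = c *: B y x.
Proof. by rewrite Bsym BZl Bsym. Qed.
Lemma B0l x : B 0 x = 0.
Proof. by apply: (@addf0 _ (B ^~ x)) => a b; rewrite Badd. Qed.
Lemma B0r x : B x 0 = 0.
Proof. by rewrite Bsym B0l. Qed.

Definition rad v := forall x, B x v = 0.
Lemma radD v w : rad v -> rad w -> rad (v + w).
Proof. by move=> hv hw x; rewrite Baddr hv hw addr0. Qed.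
Lemma radZ c v : rad v -> rad (c *: v).
Proof. by move=> hv x; rewrite BZr hv scaler0. Qed.
Lemma rad0 : rad 0.
Proof. by move=> x; rewrite B0r. Qed.
Lemma radB a b : rad (B a b).
Proof. by move=> x; rewrite BB. Qed.
Lemma radl v x : rad v -> B v x = 0.
Proof. by move=> hv; rewrite Bsym hv. Qed.
Lemma rad_sum (I : Type) (r : seq I) (P : pred I) (F : I -> VV) :
  (forall i, P i -> rad (F i)) -> rad (\sum_(i <- r | P i) F i).
Proof. by move=> H; apply: (big_ind rad rad0 radD) => i /H. Qed.

Lemma memW v : v \in WB B <-> rad v.
Proof.
split; last first.
  by move=> hv; apply: memv_span; rewrite mem_enum inE; apply/forallP => x; rewrite hv.
move=> /coord_span ->; apply: rad_sum => i _; apply: radZ.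
have Hm u : u \in enum [set k : VV | [forall x, B x k == 0%R]] -> rad u.
  by rewrite mem_enum inE => /forallP H x; apply/eqP.
by apply: Hm; apply: mem_nth; rewrite size_tuple.
Qed.

Definition good f0 f1 f2 :=
  (forall v, exists c0 c1 c2, rad (v + (c0 *: f0 + c1 *: f1 + c2 *: f2))) /\
  (forall c0 c1 c2, rad (c0 *: f0 + c1 *: f1 + c2 *: f2) -> [/\ c0 = 0, c1 = 0 & c2 = 0]).

Hypothesis hW : \dim (WB B) = m.

Lemma good_exists : exists f0 f1 f2, good f0 f1 f2.
Proof.
set Ev := ((WB B)^C)%VS.
have dE : \dim Ev = 3.
  rewrite dimv_compl dimvf /dim /= mul1n hW; lia.
have := vbasisP Ev; have : size (tval (vbasis Ev)) = 3 by rewrite size_tuple.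
move: (tval (vbasis Ev)) => l; case: l => [|f0 [|f1 [|f2 [|? ?]]]] //= _ /andP[/eqP hsp hfr].
exists f0, f1, f2; split.
  move=> v; have := memvf v; rewrite -(addv_complf (WB B)) => /memv_addP[w /memW wW [y yE ->]].
  move: yE; rewrite -/Ev -hsp => /span3P[c0 [c1 [c2 ->]]].
  by exists c0, c1, c2; rewrite -addrA addvv addr0.
move=> c0 c1 c2 /memW hW'; apply: (free3 hfr); apply/eqP; rewrite -memv0.
rewrite -(capv_compl (WB B)) memv_cap hW' /= -/Ev -hsp.
by rewrite !memvD ?memvZ ?memv_span ?inE ?eqxx ?orbT.
Qed.



Lemma expand3 f0 f1 f2 (a0 a1 a2 b0 b1 b2 : 'F_2) :
  B (a0 *: f0 + a1 *: f1 + a2 *: f2) (b0 *: f0 + b1 *: f1 + b2 *: f2) =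
  (a0 * b1 + a1 * b0) *: B f0 f1 + (a0 * b2 + a2 * b0) *: B f0 f2 + (a1 * b2 + a2 * b1) *: B f1 f2.
Proof.
rewrite !Badd !Baddr !BZl !BZr !Balt (Bsym f1 f0) (Bsym f2 f0) (Bsym f2 f1).
vid.
Qed.

Section Good.
Variables f0 f1 f2 : VV.
Hypothesis hg : good f0 f1 f2.

Lemma good_dec a : exists c0 c1 c2 w, rad w /\ a = c0 *: f0 + c1 *: f1 + c2 *: f2 + w.
Proof.
have [c0 [c1 [c2 hr]]] := (proj1 hg) a.
exists c0, c1, c2, (a + (c0 *: f0 + c1 *: f1 + c2 *: f2)); split => //.
by rewrite addrC -addrA addvv addr0.
Qed.

Lemma B_dec a b : exists a0 a1 a2 b0 b1 b2, B a b =
  (a0 * b1 + a1 * b0) *: B f0 f1 + (a0 * b2 + a2 * b0) *: B f0 f2 + (a1 * b2 + a2 * b1) *: B f1 f2.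
Proof.
have [a0 [a1 [a2 [wa [ha ->]]]]] := good_dec a.
have [b0 [b1 [b2 [wb [hb ->]]]]] := good_dec b.
exists a0, a1, a2, b0, b1, b2.
by rewrite Badd (radl _ ha) addr0 Baddr hb addr0 expand3.
Qed.

Lemma UB_span : UB B = <<[:: B f0 f1; B f0 f2; B f1 f2]>>%VS.
Proof.
apply/eqP; rewrite eqEsubv; apply/andP; split; apply/span_subvP => u.
  move=> /allpairsP[[a b] [_ _ ->]] /=.
  have [a0 [a1 [a2 [b0 [b1 [b2 ->]]]]]] := B_dec a b.
  by rewrite !memvD ?memvZ ?memv_span ?inE ?eqxx ?orbT.
have Hm a b : B a b \in UB B.
  by apply: memv_span; apply: allpairs_f; rewrite mem_enum inE.
by rewrite !inE => /or3P[] /eqP ->; apply: Hm.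
Qed.

Lemma rad_of3 v : B f0 v = 0 -> B f1 v = 0 -> B f2 v = 0 -> rad v.
Proof.
move=> h0 h1 h2 x; have [c0 [c1 [c2 [w [hw ->]]]]] := good_dec x.
by rewrite !Badd !BZl h0 h1 h2 (radl _ hw) !scaler0 !addr0.
Qed.

End Good.

Lemma good_rot f0 f1 f2 : good f0 f1 f2 -> good f1 f2 f0.
Proof.
move=> [hs hi]; split.
  move=> v; have [c0 [c1 [c2 h]]] := hs v; exists c1, c2, c0.
  by congr rad: h; vid.
move=> c0 c1 c2 h; have h' : rad (c2 *: f0 + c0 *: f1 + c1 *: f2) by congr rad: h; vid.
by have [? ? ?] := hi _ _ _ h'.
Qed.

Lemma good_swap f0 f1 f2 : good f0 f1 f2 -> good f0 f2 f1.
Proof.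
move=> [hs hi]; split.
  move=> v; have [c0 [c1 [c2 h]]] := hs v; exists c0, c2, c1.
  by congr rad: h; vid.
move=> c0 c1 c2 h; have h' : rad (c0 *: f0 + c2 *: f1 + c1 *: f2) by congr rad: h; vid.
by have [? ? ?] := hi _ _ _ h'.
Qed.

Lemma good_add f0 f1 f2 c : good f0 f1 f2 -> good (f0 + c *: f1) f1 f2.
Proof.
move=> [hs hi]; split.
  move=> v; have [c0 [c1 [c2 h]]] := hs v; exists c0, (c1 + c0 * c), c2.
  by congr rad: h; vid.
move=> c0 c1 c2 h; have h' : rad (c0 *: f0 + (c1 + c0 * c) *: f1 + c2 *: f2) by congr rad: h; vid.
have [h0 h1 h2] := hi _ _ _ h'.
by split => //; move: h1; rewrite h0 mul0r addr0.
Qed.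

Lemma build f0 f1 f2 (us : seq VV) : good f0 f1 f2 -> free us -> (forall u, u \in us -> rad u) ->
  exists p : {perm VV}, [/\ addf p,
    (forall x, exists r, rad r /\ p x = cx x 0 *: f0 + cx x 1 *: f1 + cx x 2 *: f2 + r) &
    (forall k, (k < size us)%N -> p (ev (m.+2) (k + 3)) = nth 0 us k)].
Proof.
move=> hg hfus hus.
set X := <<us>>%VS.
have hXW : (X <= WB B)%VS by apply/span_subvP => u /hus /memW.
set ws := tval (vbasis (WB B :\: X)).
have hsz : (size us + size ws = m)%N.
  rewrite /ws size_tuple; transitivity (\dim (WB B)); last exact: hW.
  rewrite -(dimv_cap_compl (WB B) X) (capv_idPr hXW).
  by move/eqP: hfus => ->.
set b := [:: f0; f1; f2] ++ us ++ ws.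
have hbs : size b = m.+3 by rewrite /b /= size_cat hsz.
have Wsub : (WB B <= <<us ++ ws>>)%VS.
  rewrite span_cat -{1}(addv_diff_cap (WB B) X) (capv_idPr hXW) addvC.
  by rewrite (span_basis (vbasisP _)).
have full : (<<b>> = fullv)%VS.
  apply/eqP; rewrite eqEsubv subvf /=; apply/subvP => v _.
  have [c0 [c1 [c2 [w [hw ->]]]]] := good_dec hg v.
  rewrite /b span_cat; apply: memv_add.
    by rewrite !memvD ?memvZ ?memv_span ?inE ?eqxx ?orbT.
  by apply: (subvP Wsub); apply/memW.
have hfb : free b by rewrite /free full dimvf /dim /= mul1n; apply/eqP; rewrite size_cat hsz.
pose psi (x : VV) := \sum_(i < m.+3) x 0 i *: b`_i.
have psiD : addf psi.
  by move=> x y; rewrite /psi -big_split; apply: eq_bigr => i _; rewrite mxE scalerDl.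
have psi_inj : injective psi.
  move=> x y E; apply/rowP => i0.
  have E2 : \sum_(i < m.+3) (x 0 i + y 0 i) *: b`_i = 0.
    have -> : \sum_(i < m.+3) (x 0 i + y 0 i) *: b`_i = psi x + psi y.
      by rewrite /psi -big_split; apply: eq_bigr => i _; rewrite scalerDl.
    by rewrite E addvv.
  have := free_sum0 hbs hfb E2 i0.
  by move=> h; apply/eqP; rewrite -subr_eq0 oppF2 h.
exists (perm psi_inj); split.
- by move=> x y; rewrite !permE psiD.
- move=> x; rewrite permE /psi !big_ord_recl.
  exists (\sum_(i < m) x 0 (lift ord0 (lift ord0 (lift ord0 i))) *: b`_(lift ord0 (lift ord0 (lift ord0 i)))).
  split.
    apply: rad_sum => i _; apply: radZ; rewrite /b /=.
    have : nth 0 (us ++ ws) i \in us ++ ws by apply: mem_nth; rewrite size_cat hsz.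
    rewrite mem_cat => /orP[/hus //|hi]; apply/memW.
    by apply: (subvP (diffvSl (WB B) X)); rewrite -(span_basis (vbasisP (WB B :\: X))) memv_span.
  have c0 : x 0 ord0 = cx x 0 by rewrite /cx; congr (x 0 _); apply: val_inj; rewrite /= inordK.
  have c1 : x 0 (lift ord0 ord0) = cx x 1 by rewrite /cx; congr (x 0 _); apply: val_inj; rewrite /= inordK.
  have c2 : x 0 (lift ord0 (lift ord0 ord0)) = cx x 2 by rewrite /cx; congr (x 0 _); apply: val_inj; rewrite /= inordK.
  by rewrite c0 c1 c2 !addrA.
- move=> k hk; rewrite permE /psi.
  have hk3 : (k + 3 < m.+3)%N by rewrite addn3 !ltnS; rewrite -hsz; apply: (leq_trans hk); rewrite leq_addr.
  rewrite (bigD1 (inord (k + 3))) //= big1 ?addr0.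
    by rewrite evE /= inordK // eqxx scale1r /b addn3 /= nth_cat hk.
  move=> i /eqP hi; rewrite evE; case: eqP => [hv|]; last by rewrite scale0r.
  by exfalso; apply: hi; apply: val_inj; rewrite /= inordK.
Qed.

Lemma Bp_expand (p : {perm VV}) f0 f1 f2 :
  (forall x, exists r, rad r /\ p x = cx x 0 *: f0 + cx x 1 *: f1 + cx x 2 *: f2 + r) ->
  forall x y, B (p x) (p y) = (cx x 0 * cx y 1 + cx x 1 * cx y 0) *: B f0 f1
     + (cx x 0 * cx y 2 + cx x 2 * cx y 0) *: B f0 f2 + (cx x 1 * cx y 2 + cx x 2 * cx y 1) *: B f1 f2.
Proof.
move=> hp x y; have [r [hr ->]] := hp x; have [r' [hr' ->]] := hp y.
by rewrite Badd (radl _ hr) addr0 Baddr hr' addr0 expand3.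
Qed.

Lemma case2 g0 g1 g2 : good g0 g1 g2 -> B g0 g1 = 0 ->
  exists p : {perm VV}, [/\ (2 <= m)%N, \dim (UB B) = 2, addf p &
     forall x y, B (p x) (p y) = p (Bstd (m.+2) 2 x y)].
Proof.
move=> hg h01.
have hfr : free [:: B g0 g2; B g1 g2].
  apply/negPn/negP; rewrite free_cons seq1_free negb_and negbK span_seq1 => /orP[/vlineP[c hc]|h12].
    have := proj2 hg 1 c 0; rewrite scale0r addr0.
    case; last by move=> /eqP; rewrite oner_eq0.
    apply: (rad_of3 hg).
    - by rewrite Baddr !BZr Balt h01 !scaler0 addr0.
    - by rewrite Baddr !BZr Balt (Bsym g1 g0) h01 !scaler0 addr0.
    - by rewrite Baddr !BZr (Bsym g2 g0) (Bsym g2 g1) hc scale1r addvv.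
  have := proj2 hg 0 1 0; rewrite scale0r add0r scale1r scale0r addr0.
  case; last by move=> _ /eqP; rewrite oner_eq0.
  move: h12; rewrite negbK => /eqP h12.
  apply: (rad_of3 hg); first done; first by rewrite Balt.
  by rewrite Bsym h12.
have hdim : \dim <<[:: B g0 g2; B g1 g2]>>%VS = 2 by move/eqP: hfr.
have hU : \dim (UB B) = 2 by rewrite (UB_span hg) h01 span_cons vline0 add0v hdim.
have radu u : u \in [:: B g0 g2; B g1 g2] -> rad u.
  by rewrite !inE => /orP[] /eqP ->; apply: radB.
have [p [pD pdec pev]] := build hg hfr radu.
exists p; split => //.
  have hsub : (<<[:: B g0 g2; B g1 g2]>> <= WB B)%VS by apply/span_subvP => u hu; apply/memW; exact: radu.
  by have := dimvS hsub; rewrite hdim hW.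
move=> x y; rewrite (Bp_expand pdec) /Bstd /= /B2 pD (addfZ _ _ pD) (addfZ _ _ pD).
have e3 : p (ev m.+2 3) = B g0 g2 := pev 0 isT.
have e4 : p (ev m.+2 4) = B g1 g2 := pev 1 isT.
by rewrite e3 e4 h01 scaler0 add0r.
Qed.

Lemma classify : exists d (p : {perm VV}), [/\ (d = 2 /\ 2 <= m)%N \/ (d = 3 /\ 3 <= m)%N,
  \dim (UB B) = d, addf p & forall x y, B (p x) (p y) = p (Bstd (m.+2) d x y)].
Proof.
have [f0 [f1 [f2 hg]]] := good_exists.
have radu u : u \in [:: B f0 f1; B f0 f2; B f1 f2] -> rad u.
  by rewrite !inE => /or3P[] /eqP ->; apply: radB.
case hfr: (free [:: B f0 f1; B f0 f2; B f1 f2]).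
  have hdim : \dim <<[:: B f0 f1; B f0 f2; B f1 f2]>>%VS = 3 by move/eqP: hfr.
  have [p [pD pdec pev]] := build hg hfr radu.
  exists 3, p; split => //.
  + right; split => //.
    have hsub : (<<[:: B f0 f1; B f0 f2; B f1 f2]>> <= WB B)%VS by apply/span_subvP => u hu; apply/memW; exact: radu.
    by have := dimvS hsub; rewrite hdim hW.
  + by rewrite (UB_span hg).
  + move=> x y; rewrite (Bp_expand pdec) /Bstd /= /B3 pD pD (addfZ _ _ pD) (addfZ _ _ pD) (addfZ _ _ pD).
    have e3 : p (ev m.+2 3) = B f0 f1 := pev 0 isT.
    have e4 : p (ev m.+2 4) = B f0 f2 := pev 1 isT.
    have e5 : p (ev m.+2 5) = B f1 f2 := pev 2 isT.
    by rewrite e3 e4 e5.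
have hcase : exists g0 g1 g2, good g0 g1 g2 /\ B g0 g1 = 0.
  move: hfr; rewrite free_cons free_cons seq1_free => /negbT; rewrite !negb_and !negbK => /or3P[].
  - rewrite span_cons span_seq1 => /memv_addP[y0 /vlineP[a ->] [y1 /vlineP[b ->] h]].
    exists (f0 + b *: f2), (f1 + a *: f2), f2; split.
      apply: good_rot; apply: good_rot; apply: good_add; apply: good_rot.
      apply: good_swap; apply: good_add; exact: good_swap.
    rewrite Badd Baddr Baddr !BZl !BZr Balt !scaler0 addr0 h (Bsym f2 f1).
    by vid.
  - rewrite span_seq1 => /vlineP[c hc].
    exists (f0 + c *: f1), f2, f1; split; first by apply: good_swap; apply: good_add.
    by rewrite Badd BZl hc addvv.
  - move=> /eqP h12; exists f1, f2, f0; split => //; exact: good_rot.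
have [g0 [g1 [g2 [hg' h01]]]] := hcase.
have [p [hm hU pD hp]] := case2 hg' h01.
by exists 2, p; split => //; left.
Qed.

End Abs.

Section Conj.
Variable s : nat.
Implicit Types (x y z : V s).

Lemma addf_inv (q : {perm V s}) : addf q -> addf (q^-1)%g.
Proof.
by move=> hq x y; apply: (@perm_inj _ q); rewrite hq !permKV.
Qed.

Lemma HsetP (B : V s -> V s -> V s) h : h \in Hset B <-> addf h /\ forall a b, h (B a b) = B (h a) (h b).
Proof.
rewrite inE; split.
  by move=> /andP[/GLpE hh /forallP H]; split => // a b; apply/eqP; apply: (forallP (H a)).
by move=> [hh H]; apply/andP; split; [apply/GLpE | apply/forallP => a; apply/forallP => b; rewrite H].
Qed.

Lemma conjH (B1 B2 : V s -> V s -> V s) (q : {perm V s}) k : addf q ->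
  (forall x y, B2 (q x) (q y) = q (B1 x y)) -> k \in Hset B1 -> (k ^ q)%g \in Hset B2.
Proof.
move=> hq hr /HsetP[hk kB]; apply/HsetP.
have qE z : (k ^ q)%g z = q (k ((q^-1)%g z)) by rewrite conjgE !permM.
split.
  by move=> x y; rewrite !qE (addf_inv hq) hk hq.
move=> a b; rewrite -(permKV q a) -(permKV q b) hr !qE !permK kB hr.
by [].
Qed.

Lemma Hset_conj (B B' : V s -> V s -> V s) (p : {perm V s}) : addf p ->
  (forall x y, B (p x) (p y) = p (B' x y)) -> Hset B = (Hset B' :^ p)%g.
Proof.
move=> hp hr; apply/setP => k; rewrite mem_conjg; apply/idP/idP.
  apply: conjH; first exact: addf_inv.
  by move=> x y; apply: (@perm_inj _ p); rewrite permKV -hr !permKV.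
by move=> /(conjH hp hr); rewrite -conjgM mulVg conjg1.
Qed.

Definition inY a b z := z = 0 \/ z = a \/ z = b \/ z = a + b.
Definition Pinv (H : {set {perm V s}}) := exists a b : V s,
  [/\ a != 0, b != 0, a != b & forall h, h \in H -> inY a b (h a) /\ inY a b (h b)].

Lemma inY_map a b z (q : V s -> V s) : addf q -> inY a b z -> inY (q a) (q b) (q z).
Proof.
move=> hq [->|[->|[->|->]]]; rewrite /inY ?hq; tauto || (left; exact: addf0).
Qed.

Lemma Pinv_conj H (q : {perm V s}) : addf q -> Pinv H -> Pinv (H :^ q)%g.
Proof.
move=> hq [a [b [a0 b0 ab hY]]]; exists (q a), (q b); split.
- by apply: contra a0 => /eqP qa0; apply/eqP; apply: (@perm_inj _ q); rewrite qa0 addf0.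
- by apply: contra b0 => /eqP qa0; apply/eqP; apply: (@perm_inj _ q); rewrite qa0 addf0.
- by apply: contra ab => /eqP /perm_inj ->.
move=> h; rewrite mem_conjg => /hY [ha hb].
have hE z : h (q z) = q ((h ^ q^-1)%g z) by rewrite conjgE invgK !permM permKV.
by rewrite !hE; split; apply: inY_map.
Qed.

Lemma Pinv_conjE H (q : {perm V s}) : addf q -> Pinv (H :^ q)%g <-> Pinv H.
Proof.
move=> hq; split; last exact: Pinv_conj.
by move=> /(Pinv_conj (addf_inv hq)); rewrite -conjsgM mulgV conjsg1.
Qed.

End Conj.

Section Std.
Variable n : nat.
Local Notation VV := (V n.+1).
Local Notation e := (ev n).
Implicit Types (x y z v w : VV).

Lemma cxD x y k : cx (x + y) k = cx x k + cx y k. Proof. by rewrite /cx mxE. Qed.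
Lemma cxZ c x k : cx (c *: x) k = c * cx x k. Proof. by rewrite /cx mxE. Qed.
Lemma cx0 k : cx (0 : VV) k = 0. Proof. by rewrite /cx mxE. Qed.
Lemma cx_ev k l : (l < n.+1)%N -> cx (e k) l = (l == k)%:R.
Proof. by move=> hl; rewrite /cx evE /= inordK. Qed.
Lemma vec_ext v w : (forall l, (l < n.+1)%N -> cx v l = cx w l) -> v = w.
Proof. by move=> H; apply/rowP => j; have := H j (ltn_ord j); rewrite /cx inord_val. Qed.

Lemma ev_neq k l : (k < n.+1)%N -> k != l -> e k != e l.
Proof.
move=> hk hkl; apply/eqP => E; have := congr1 (fun v => cx v k) E.
by rewrite !cx_ev // eqxx (negbTE hkl) => /eqP; rewrite oner_eq0.
Qed.

Lemma ev_nz k : (k < n.+1)%N -> e k != 0.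
Proof.
move=> hk; apply/eqP => E; have := congr1 (fun v => cx v k) E.
by rewrite cx_ev // eqxx cx0 => /eqP; rewrite oner_eq0.
Qed.

Lemma mkH (B : VV -> VV -> VV) (f : VV -> VV) : (forall x, f (f x) = x) -> addf f ->
  (forall x y, f (B x y) = B (f x) (f y)) -> exists2 h, h \in Hset B & forall x, h x = f x.
Proof.
move=> ff hf hB; have inj := can_inj ff; exists (perm inj); last by move=> x; rewrite permE.
by apply/HsetP; split => [x y|a b]; rewrite !permE.
Qed.

End Std.

Ltac cxs := rewrite ?cxD ?cxZ ?cx0 ?cx_ev //.
Ltac lcase l hl := case: l hl => [|[|[|[|[|[|l]]]]]] hl /=.

Section Std2.
Variable m : nat.
Hypothesis hm : (2 <= m)%N.
Local Notation VV := (V m.+3).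
Local Notation e := (ev m.+2).

Lemma Pinv2 : Pinv (Hset (Bstd m.+2 2)).
Proof.
have h3 : (3 < m.+3)%N by lia.
have h4 : (4 < m.+3)%N by lia.
exists (e 3), (e 4); split; [exact: ev_nz | exact: ev_nz | exact: ev_neq | ].
move=> h /HsetP[hh hB].
have E3 : e 3 = Bstd m.+2 2 (e 0) (e 2).
  rewrite /Bstd /= /B2; cxs => /=; rewrite !(mul1r, mul0r, addr0, add0r, scale1r, scale0r) //.
have E4 : e 4 = Bstd m.+2 2 (e 1) (e 2).
  rewrite /Bstd /= /B2; cxs => /=; rewrite !(mul1r, mul0r, addr0, add0r, scale1r, scale0r) //.
have gen x y : inY (e 3) (e 4) (Bstd m.+2 2 x y).
  rewrite /Bstd /= /B2 /inY.
  case: (F2cases (cx x 0 * cx y 2 + cx x 2 * cx y 0)) => ->;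
  case: (F2cases (cx x 1 * cx y 2 + cx x 2 * cx y 1)) => ->;
  rewrite ?scale0r ?scale1r ?addr0 ?add0r; tauto.
have := hB (e 0) (e 2); rewrite -E3 => ->.
have := hB (e 1) (e 2); rewrite -E4 => ->.
by split; apply: gen.
Qed.

End Std2.

Lemma inY_add s (a b z1 z2 : V s) : inY a b z1 -> inY a b z2 -> inY a b (z1 + z2).
Proof.
rewrite /inY => h1 h2.
by case: h1 => [->|[->|[->|->]]]; case: h2 => [->|[->|[->|->]]];
  first [left; vid | right; left; vid | right; right; left; vid | right; right; right; vid].
Qed.

Lemma inY_L3 s (a b x y z : V s) : inY a b x -> inY a b y -> inY a b z ->
  x != 0 -> y != 0 -> z != 0 -> x != y -> x != z -> y != z -> z = x + y.
Proof.
rewrite /inY.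
by case=> [->|[->|[->|->]]]; case=> [->|[->|[->|->]]]; case=> [->|[->|[->|->]]];
  rewrite ?eqxx //= => *; vid.
Qed.

Fact map_key : unit. Proof. exact: tt. Qed.
Definition Gm n j k (x : V n.+1) : V n.+1 := locked_with map_key (x + cx x j *: ev n k).
Definition tau1 n (x : V n.+1) : V n.+1 := locked_with map_key (x + cx x 0 *: ev n 1 + cx x 4 *: ev n 5).
Definition rho1 n (x : V n.+1) : V n.+1 := locked_with map_key
  (x + (cx x 0 + cx x 1) *: (ev n 0 + ev n 1) + (cx x 4 + cx x 5) *: (ev n 4 + ev n 5)).
Definition rho2 n (x : V n.+1) : V n.+1 := locked_with map_key
  (x + (cx x 1 + cx x 2) *: (ev n 1 + ev n 2) + (cx x 3 + cx x 4) *: (ev n 3 + ev n 4)).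
Arguments Gm : clear implicits.
Arguments tau1 : clear implicits.
Arguments rho1 : clear implicits.
Arguments rho2 : clear implicits.


Lemma cxGm n j k (x : V n.+1) l : cx (Gm n j k x) l = cx x l + cx x j * cx (ev n k) l.
Proof. by rewrite /Gm unlock cxD cxZ. Qed.
Lemma cxtau1 n (x : V n.+1) l : cx (tau1 n x) l = cx x l + cx x 0 * cx (ev n 1) l + cx x 4 * cx (ev n 5) l.
Proof. by rewrite /tau1 unlock !cxD !cxZ. Qed.
Lemma cxrho1 n (x : V n.+1) l : cx (rho1 n x) l = cx x l + (cx x 0 + cx x 1) * (cx (ev n 0) l + cx (ev n 1) l)
  + (cx x 4 + cx x 5) * (cx (ev n 4) l + cx (ev n 5) l).
Proof. by rewrite /rho1 unlock !cxD !cxZ !cxD. Qed.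
Lemma cxrho2 n (x : V n.+1) l : cx (rho2 n x) l = cx x l + (cx x 1 + cx x 2) * (cx (ev n 1) l + cx (ev n 2) l)
  + (cx x 3 + cx x 4) * (cx (ev n 3) l + cx (ev n 4) l).
Proof. by rewrite /rho2 unlock !cxD !cxZ !cxD. Qed.
Lemma B3c n (x y : V n.+1) l : cx (Bstd n 3 x y) l = (cx x 0 * cx y 1 + cx x 1 * cx y 0) * cx (ev n 3) l
  + (cx x 0 * cx y 2 + cx x 2 * cx y 0) * cx (ev n 4) l + (cx x 1 * cx y 2 + cx x 2 * cx y 1) * cx (ev n 5) l.
Proof. by rewrite /Bstd /= /B3 !cxD !cxZ. Qed.
Lemma GmE n j k (x : V n.+1) : Gm n j k x = x + cx x j *: ev n k.
Proof. by rewrite /Gm unlock. Qed.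
Lemma tau1E n (x : V n.+1) : tau1 n x = x + cx x 0 *: ev n 1 + cx x 4 *: ev n 5.
Proof. by rewrite /tau1 unlock. Qed.

Lemma addfE n (f : V n.+1 -> V n.+1) : (forall x y l, (l < n.+1)%N -> cx (f (x + y)) l = cx (f x) l + cx (f y) l) -> addf f.
Proof. by move=> H x y; apply: vec_ext => l hl; rewrite H // cxD. Qed.


Section Std3.
Variable m : nat.
Hypothesis hm : (3 <= m)%N.
Local Notation VV := (V m.+3).
Local Notation e := (ev m.+2).
Local Notation B := (Bstd m.+2 3).

Let h0 : (0 < m.+3)%N. Proof. by lia. Qed.
Let h1 : (1 < m.+3)%N. Proof. by lia. Qed.
Let h2 : (2 < m.+3)%N. Proof. by lia. Qed.
Let h3 : (3 < m.+3)%N. Proof. by lia. Qed.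
Let h4 : (4 < m.+3)%N. Proof. by lia. Qed.
Let h5 : (5 < m.+3)%N. Proof. by lia. Qed.

Ltac cxsimp := rewrite ?cxGm ?cxtau1 ?cxrho1 ?cxrho2 ?B3c ?cxD ?cxZ ?cx0 ?cx_ev //=.

Lemma G_in j k : (j < m.+3)%N -> (j == 3) = false -> (j == 4) = false -> (j == 5) = false ->
  (0 == k) = false -> (1 == k) = false -> (2 == k) = false -> (j == k) = false ->
  exists2 h, h \in Hset B & forall x, h x = Gm m.+2 j k x.
Proof.
move=> hj hj3 hj4 hj5 hk0 hk1 hk2 hjk; apply: mkH.
- by move=> x; apply: vec_ext => l hl; rewrite !cxGm !cx_ev // hjk /=; f2.
- by apply: addfE => x y l hl; rewrite !cxGm !cxD; f2.
move=> x y; apply: vec_ext => l hl.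
rewrite cxGm !B3c !cxGm !cx_ev //.
by rewrite ?hk0 ?hk1 ?hk2 ?hj3 ?hj4 ?hj5 /=; f2.
Qed.

Lemma tau1_in : exists2 h, h \in Hset B & forall x, h x = tau1 m.+2 x.
Proof.
apply: mkH.
- by move=> x; apply: vec_ext => l hl; rewrite !cxtau1 !cx_ev //=; f2.
- by apply: addfE => x y l hl; rewrite !cxtau1 !cxD; f2.
move=> x y; apply: vec_ext => l hl.
by rewrite cxtau1 !B3c !cxtau1 !cx_ev //=; f2.
Qed.

Lemma rho1_in : exists2 h, h \in Hset B & forall x, h x = rho1 m.+2 x.
Proof.
apply: mkH.
- by move=> x; apply: vec_ext => l hl; rewrite !cxrho1 !cx_ev //=; f2.
- by apply: addfE => x y l hl; rewrite !cxrho1 !cxD; f2.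
move=> x y; apply: vec_ext => l hl.
by rewrite cxrho1 !B3c !cxrho1 !cx_ev //=; f2.
Qed.

Lemma rho2_in : exists2 h, h \in Hset B & forall x, h x = rho2 m.+2 x.
Proof.
apply: mkH.
- by move=> x; apply: vec_ext => l hl; rewrite !cxrho2 !cx_ev //=; f2.
- by apply: addfE => x y l hl; rewrite !cxrho2 !cxD; f2.
move=> x y; apply: vec_ext => l hl.
by rewrite cxrho2 !B3c !cxrho2 !cx_ev //=; f2.
Qed.

Lemma noPinv3 : ~ Pinv (Hset B).
Proof.
move=> [a [b [a0 b0 ab hY]]].
have ya : inY a b a by right; left.
have Yh h z : h \in Hset B -> inY a b z -> inY a b (h z).
  move=> hH; have [ha hb] := hY h hH; have [hh _] := (HsetP _ h).1 hH.
  case=> [->|[->|[->|->]]] //; first by rewrite (addf0 hh); left.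
  by rewrite hh; apply: inY_add.
have hnot : ~ [/\ inY a b (e 3), inY a b (e 4) & inY a b (e 5)].
  case=> y3 y4 y5.
  have := inY_L3 y3 y4 y5 (ev_nz h3) (ev_nz h4) (ev_nz h5) (@ev_neq m.+2 3 4 h3 isT) (@ev_neq m.+2 3 5 h3 isT) (@ev_neq m.+2 4 5 h4 isT).
  by move=> /(congr1 (fun v => cx v 5)); rewrite cxD !cx_ev //=.
have claim1 v j : inY a b v -> (j < m.+3)%N -> (j == 3) = false -> (j == 4) = false ->
    (j == 5) = false -> cx v j = 0.
  move=> yv hj hj3 hj4 hj5; case: (F2cases (cx v j)) => // hv; exfalso; apply: hnot.
  have step (h : {perm VV}) k : h \in Hset B -> (forall x, h x = Gm m.+2 j k x) -> inY a b (e k).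
    move=> hH hE; have := Yh _ _ hH yv; rewrite hE GmE hv scale1r => yk.
    by have := inY_add yv yk; rewrite addrA addvv add0r.
  split.
  - by have [h hH hE] := @G_in j 3 hj hj3 hj4 hj5 erefl erefl erefl hj3; apply: step hH hE.
  - by have [h hH hE] := @G_in j 4 hj hj3 hj4 hj5 erefl erefl erefl hj4; apply: step hH hE.
  - by have [h hH hE] := @G_in j 5 hj hj3 hj4 hj5 erefl erefl erefl hj5; apply: step hH hE.
have claim2 v : inY a b v -> cx v 4 = 0.
  move=> yv; case: (F2cases (cx v 4)) => // hv; exfalso; apply: hnot.
  have c0 : cx v 0 = 0 := claim1 v 0 yv h0 erefl erefl erefl.
  have y5 : inY a b (e 5).
    have [h hH hE] := tau1_in; have := Yh _ _ hH yv.
    rewrite hE tau1E c0 hv scale0r addr0 scale1r => y.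
    by have := inY_add yv y; rewrite addrA addvv add0r.
  have y4 : inY a b (e 4).
    have [h hH hE] := rho1_in; have := Yh _ _ hH y5.
    have -> : h (e 5) = e 4 by rewrite hE; apply: vec_ext => l hl; rewrite cxrho1 !cx_ev //=; f2.
    by [].
  have y3 : inY a b (e 3).
    have [h hH hE] := rho2_in; have := Yh _ _ hH y4.
    have -> : h (e 4) = e 3 by rewrite hE; apply: vec_ext => l hl; rewrite cxrho2 !cx_ev //=; f2.
    by [].
  by split.
have a4 : cx a 4 = 0 := claim2 a ya.
have a1 : cx a 1 = 0 := claim1 a 1 ya h1 erefl erefl erefl.
have a0' : cx a 0 = 0 := claim1 a 0 ya h0 erefl erefl erefl.
have a2 : cx a 2 = 0 := claim1 a 2 ya h2 erefl erefl erefl.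
have a5 : cx a 5 = 0.
  have [h hH hE] := rho1_in; have := claim2 _ (Yh _ _ hH ya).
  by rewrite hE cxrho1 !cx_ev //= a4 a0' a1 => H; rewrite -[RHS]H; f2.
have a3 : cx a 3 = 0.
  have [h hH hE] := rho2_in; have := claim2 _ (Yh _ _ hH ya).
  by rewrite hE cxrho2 !cx_ev //= a4 a1 a2 => H; rewrite -[RHS]H; f2.
move/eqP: a0; apply; apply: vec_ext => l hl; rewrite cx0.
case: (eqVneq l 3) => [->|n3] //; case: (eqVneq l 4) => [->|n4] //; case: (eqVneq l 5) => [->|n5] //.
by apply: claim1 => //; apply: negbTE.
Qed.

End Std3.
Lemma addf_mul s (p q : {perm V s}) : addf p -> addf q -> addf (p * q)%g.
Proof. by move=> hp hq x y; rewrite !permM hp hq. Qed.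

Local Close Scope ring_scope.

Theorem corollary1 (s : nat) (T1 T2 : {group {perm V s}}) :
  alt_op T1 -> alt_op T2 ->
  (\dim (Wsp T1) + 3 = s)%N -> (\dim (Wsp T2) + 3 = s)%N ->
  ((exists2 g : {perm V s}, g \in GLp s & (Hcirc T1 :^ g^-1)%g = Hcirc T2)
   <-> \dim (Usp T1) = \dim (Usp T2)).
Proof.
move: s T1 T2 => [|[|[|m]]] T1 T2 hT1 hT2 hW1 hW2; try by (exfalso; lia).
have hW1' : \dim (WB (dotp T1)) = m by rewrite -WspE //; lia.
have hW2' : \dim (WB (dotp T2)) = m by rewrite -WspE //; lia.
have [d1 [p1 [hd1 hU1 p1D p1R]]] := classify (D_addl hT1) (D_sym hT1) (D_alt hT1) (D_DD hT1) hW1'.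
have [d2 [p2 [hd2 hU2 p2D p2R]]] := classify (D_addl hT2) (D_sym hT2) (D_alt hT2) (D_DD hT2) hW2'.
have H1 : Hcirc T1 = (Hset (Bstd m.+2 d1) :^ p1)%g by rewrite (HcircE hT1); apply: Hset_conj.
have H2 : Hcirc T2 = (Hset (Bstd m.+2 d2) :^ p2)%g by rewrite (HcircE hT2); apply: Hset_conj.
rewrite !UspE hU1 hU2 H1 H2; split.
  move=> [g /GLpE gD E]; clear hU1 hU2.
  have gVD := addf_inv gD.
  have P1 : Pinv (Hset (Bstd m.+2 d1)) <-> Pinv (Hset (Bstd m.+2 d2)).
    rewrite -(Pinv_conjE (Hset (Bstd m.+2 d1)) p1D) -(Pinv_conjE (Hset (Bstd m.+2 d2)) p2D) -E.
    by rewrite (Pinv_conjE _ gVD).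
  case: hd1 => [[e1 hm1]|[e1 hm1]]; case: hd2 => [[e2 hm2]|[e2 hm2]]; subst d1 d2 => //.
    by move: P1 => [/(_ (Pinv2 hm1)) /(noPinv3 hm2)].
  by move: P1 => [_ /(_ (Pinv2 hm2)) /(noPinv3 hm1)].
move=> ed; rewrite ed.
exists (p2^-1 * p1)%g.
  by apply/GLpE; apply: addf_mul => //; apply: addf_inv.
by rewrite -conjsgM invMg invgK mulgA mulgV mul1g.
Qed.
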